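(* Let $G$ be a connected graph with girth $g(G)=4$ and let $(x,y)\in E(G)$ with $d_x=d_y=d$. Then $\kappa(x,y)=0$ if and only if there is a perfect matching between $N_G(x)$ and $N_G(y)$, i.e. a bijection $\sigma:N_G(x)\to N_G(y)$ with $(a,\sigma(a))\in E(G)$ for all $a\in N_G(x)$.
   Context: Graphs are locally finite and unweighted; the girth is the length of a shortest cycle. $d_G$ is the shortest-path metric, $N_G(v)$ the neighbour set and $d_v$ the degree of $v$; $m_v$ is the uniform probability measure on $N_G(v)$, and for an edge $(x,y)$, $\kappa(x,y)=1-W_1(m_x,m_y)$, where $W_1$ is the Wasserstein-1 (transportation) distance with respect to $d_G$. *)

(* Defs.v *)
From HB Require Import structures.
From mathcomp Require Import all_boot all_order all_algebra.
From mathcomp Require Import classical_sets reals.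
Set Implicit Arguments. Unset Strict Implicit. Unset Printing Implicit Defensive.
Import Order.TTheory GRing.Theory Num.Theory.
Local Open Scope classical_set_scope.
Local Open Scope ring_scope.

Record lfgraph (V : eqType) := LFGraph {
  nbr : V -> seq V;
  nbr_uniq : forall x, uniq (nbr x);
  nbr_sym : forall x y, (y \in nbr x) = (x \in nbr y);
  nbr_irrefl : forall x, x \notin nbr x
}.

Section Graphs.
Variables (V : eqType) (G : lfgraph V).

Definition adj : rel V := fun x y => y \in nbr G x.

Definition deg (v : V) : nat := size (nbr G v).

Definition connected : Prop :=
  forall u v : V, exists p : seq V, path adj u p && (last u p == v).

Definition is_cycle (c : seq V) : Prop := ucycle adj c /\ (3 <= size c)%N.

Definition girth_eq (k : nat) : Prop :=
  (exists c, is_cycle c /\ size c = k) /\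
  (forall c, is_cycle c -> (k <= size c)%N).

Variable R : realType.

Definition dist (u v : V) : R :=
  inf [set r : R | exists p : seq V,
        path adj u p /\ last u p = v /\ r = (size p)%:R].

Definition m (v a : V) : R :=
  if a \in nbr G v then (deg v)%:R^-1 else 0.

(* couplings of m_x and m_y; every coupling of two finitely supported
   probability measures is supported on supp m_x \times supp m_y,
   i.e. on N_G(x) \times N_G(y) *)
Definition is_coupling (x y : V) (pi : V -> V -> R) : Prop :=
  [/\ forall a b, 0 <= pi a b,
      forall a b, pi a b != 0 -> (a \in nbr G x) && (b \in nbr G y),
      forall a, \sum_(b <- nbr G y) pi a b = m x a
    & forall b, \sum_(a <- nbr G x) pi a b = m y b].

Definition transport_cost (x y : V) (pi : V -> V -> R) : R :=
  \sum_(a <- nbr G x) \sum_(b <- nbr G y) pi a b * dist a b.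

Definition W1 (x y : V) : R :=
  inf [set c : R | exists pi, is_coupling x y pi /\ c = transport_cost x y pi].

Definition kappa (x y : V) : R := 1 - W1 x y.

End Graphs.

(* Main.v *)
Require Import Defs.
From HB Require Import structures.
From mathcomp Require Import all_boot all_order all_algebra.
From mathcomp Require Import zify.
Set Implicit Arguments. Unset Strict Implicit. Unset Printing Implicit Defensive.
Import Order.TTheory GRing.Theory Num.Theory.
Section Hall.
Variables (T S : finType) (s0 : S) (r : T -> S -> bool).
Definition NS (C : {set S}) (B : {set T}) := [set b in C | [exists a in B, r a b]].

Lemma NS_sub C B : NS C B \subset C.
Proof. by apply/subsetP=> b; rewrite inE => /andP[]. Qed.

Lemma hall_gen n : forall (A : {set T}) (C : {set S}), (#|A| <= n)%N ->
 (forall B : {set T}, B \subset A -> (#|B| <= #|NS C B|)%N) ->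
 exists f : T -> S, {in A &, injective f} /\ {in A, forall a, (f a \in C) && r a (f a)}.
Proof.
elim: n => [|n IH] A C hA hH.
  exists (fun _ => s0); move: hA; rewrite leqn0 cards_eq0 => /eqP ->.
  by split=> [z|z]; rewrite inE.
have [hAn|hAn] := leqP #|A| n; first exact: IH.
have eA : #|A| = n.+1 by lia.
case: (boolP [exists B : {set T}, [&& B \subset A, B != set0, B != A &
                   (#|NS C B| <= #|B|)%N]]).
- case/existsP => B /and4P[sBA nB0 nBA tB].
  have pBA : B \proper A by rewrite properEneq nBA.
  have [f1 [i1 h1]] : exists f : T -> S, {in B &, injective f} /\
       {in B, forall a, (f a \in C) && r a (f a)}.
    apply: (IH B C); first by have := proper_card pBA; lia.
    by move=> D sDB; apply: hH; apply: subset_trans sDB sBA.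
  set C' := C :\: NS C B.
  have [f2 [i2 h2]] : exists f : T -> S, {in A :\: B &, injective f} /\
       {in A :\: B, forall a, (f a \in C') && r a (f a)}.
    apply: IH.
      have := cardsD A B; have : (0 < #|A :&: B|)%N.
        by rewrite (setIidPr (proper_sub pBA)) card_gt0.
      lia.
    move=> D sDAB.
    have dDB : [disjoint D & B].
      apply/pred0P => z /=; apply/negbTE/negP => /andP[zD zB].
      by have := subsetP sDAB z zD; rewrite inE zB.
    have e1 : #|D :|: B| = (#|D| + #|B|)%N by rewrite cardsU (disjoint_setI0 dDB) cards0 subn0.
    have sDBA : D :|: B \subset A.
      rewrite subUset (proper_sub pBA) andbT.
      by apply: subset_trans sDAB _; apply: subsetDl.
    have h := hH _ sDBA.
    have sN : NS C (D :|: B) \subset NS C B :|: NS C' D.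
      apply/subsetP => b; rewrite !inE => /andP[bC /existsP[a /andP[]]].
      rewrite inE => /orP[aD|aB] rab.
      + rewrite bC /=; case: [exists a0 in B, r a0 b]; first by [].
        by rewrite /=; apply/existsP; exists a; rewrite aD.
      + by rewrite bC /=; apply/orP; left; apply/existsP; exists a; rewrite aB.
    have := subset_leq_card sN; case: (leq_card_setU (NS C B) (NS C' D)) => + _.
    lia.
  exists (fun z => if z \in B then f1 z else f2 z); split.
  + move=> u v uA vA /=.
    have hv2 : forall w, w \in A -> w \notin B -> f2 w \notin NS C B.
      by move=> w wA wB; have := h2 w; rewrite !inE wB wA => /(_ isT) /andP[/andP[]].
    have hv1 : forall w, w \in B -> f1 w \in NS C B.
      move=> w wB; have /andP[c rw] := h1 w wB.
      by rewrite inE c; apply/existsP; exists w; rewrite wB.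
    case: (boolP (u \in B)) => uB; case: (boolP (v \in B)) => vB.
    * exact: i1.
    * by move=> e; have := hv2 v vA vB; rewrite -e hv1.
    * by move=> e; have := hv2 u uA uB; rewrite e hv1.
    * by apply: i2; rewrite inE ?uB ?vB ?uA ?vA.
  + move=> z zA /=; case: ifP => zB; first exact: h1.
    have := h2 z; rewrite !inE zB zA => /(_ isT) /andP[/andP[_ ->] ->].
    by [].
- move=> nT.
  have : A != set0 by rewrite -card_gt0 eA.
  case/set0Pn => a aA.
  have : (0 < #|NS C [set a]|)%N.
    by have := hH [set a]; rewrite cards1 sub1set => /(_ aA).
  rewrite card_gt0 => /set0Pn [b]; rewrite inE => /andP[bC /existsP[a' /andP[]]].
  rewrite inE => /eqP -> rab.
  have [f' [i' h']] : exists f : T -> S, {in A :\ a &, injective f} /\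
       {in A :\ a, forall z, (f z \in C :\ b) && r z (f z)}.
    apply: IH.
      by have := cardsD1 a A; rewrite aA; lia.
    move=> D sD.
    case: (boolP (D == set0)) => [/eqP -> |D0]; first by rewrite cards0.
    have sDA : D \subset A by apply: subset_trans sD _; apply: subsetDl.
    have aD : a \notin D by apply/negP => /(subsetP sD); rewrite !inE eqxx.
    have DA : D != A by apply/eqP => eDA; move: aD; rewrite eDA aA.
    have lt : (#|D| < #|NS C D|)%N.
      rewrite ltnNge; apply/negP => le.
      by move/existsP: nT; apply; exists D; rewrite sDA D0 DA le.
    have sN : NS C D :\ b \subset NS (C :\ b) D.
      apply/subsetP => u; rewrite !inE => /andP[ub /andP[uC ->]].
      by rewrite ub uC.
    have := subset_leq_card sN; have := cardsD1 b (NS C D).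
    case: (b \in NS C D); lia.
  exists (fun z => if z == a then b else f' z); split.
  + have hb : forall w, w \in A -> w != a -> f' w != b.
      move=> w wA wa; have := h' w; rewrite !inE wa wA => /(_ isT) /andP[/andP[]].
      by [].
    move=> u v uA vA /=.
    case: (eqVneq u a) => [->|ua]; case: (eqVneq v a) => [->|va] //.
    * by move=> e; have := hb v vA va; rewrite -e eqxx.
    * by move=> e; have := hb u uA ua; rewrite e eqxx.
    * by apply: i'; rewrite !inE ?ua ?va ?uA ?vA.
  + move=> z zA /=; case: (eqVneq z a) => [->|za]; first by rewrite bC rab.
    by have := h' z; rewrite !inE za zA => /(_ isT) /andP[/andP[_ ->] ->].
Qed.
Definition NT (B : {set T}) := NS setT B.

Lemma hall_full : (forall B : {set T}, (#|B| <= #|NT B|)%N) ->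
  exists f : T -> S, injective f /\ forall a, r a (f a).
Proof.
move=> h; have [f [fi fr]] := @hall_gen #|T| setT setT (max_card _) (fun B _ => h B).
exists f; split; first by move=> u v; apply: fi; rewrite inE.
by move=> a; have /andP[_ ->] := fr a (in_setT a).
Qed.
End Hall.

From mathcomp Require Import classical_sets reals.
From mathcomp Require Import ring lra.

Local Open Scope classical_set_scope.
Local Open Scope ring_scope.



Section Main.
Variables (R : realType) (V : eqType) (G : lfgraph V).

Lemma adj_sym a b : adj G a b = adj G b a.
Proof. by rewrite /adj nbr_sym. Qed.

Lemma adj_neq a b : adj G a b -> a != b.
Proof. by move=> h; apply/eqP => e; move: h; rewrite e /adj (negbTE (nbr_irrefl G b)). Qed.

Lemma no_tri a b c : girth_eq G 4 -> adj G a b -> adj G b c -> adj G c a -> False.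
Proof.
case=> _ hg hab hbc hca.
have hc : is_cycle G [:: a; b; c].
  split=> //; rewrite /ucycle /= -!/(adj G _ _) hab hbc hca /= !inE !negb_or.
  rewrite (adj_neq hab) (adj_neq hbc) /=.
  by rewrite eq_sym (adj_neq hca).
by have := hg _ hc.
Qed.

Lemma dist_le1 a b : adj G a b -> dist G R a b <= 1.
Proof.
move=> h; rewrite /dist.
set E := [set r : R | _].
have hl : has_lbound E by exists 0 => r [p [_ [_ ->]]]; exact: ler0n.
have := ge_inf hl; apply; exists [:: b] => /=; by rewrite h.
Qed.

Lemma dist_lb a b (k : nat) : (exists p, path (adj G) a p /\ last a p = b) ->
  (forall p, path (adj G) a p -> last a p = b -> (k <= size p)%N) -> k%:R <= dist G R a b.
Proof.
move=> [p0 [h0 l0]] H; apply: lb_le_inf.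
  by exists (size p0)%:R, p0.
by move=> r [p [hp [hl ->]]]; rewrite ler_nat; exact: H.
Qed.

Lemma dist_ge1 a b : a != b -> (exists p, path (adj G) a p /\ last a p = b) -> 1 <= dist G R a b.
Proof.
move=> ab hp; apply: (dist_lb (k := 1)) => // -[|c p] //= _ e.
by move: ab; rewrite e eqxx.
Qed.

Lemma dist_ge2 a b : a != b -> ~~ adj G a b -> (exists p, path (adj G) a p /\ last a p = b) -> 2%:R <= dist G R a b.
Proof.
move=> ab nadj hp; apply: (dist_lb (k := 2)) => // -[|c [|e p]] //=.
- by move=> _ e; move: ab; rewrite e eqxx.
- by rewrite andbT => h e; move: nadj; rewrite -e h.
Qed.


Lemma path_xy x y a b : adj G x y -> a \in nbr G x -> b \in nbr G y ->
  exists p, path (adj G) a p /\ last a p = b.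
Proof.
move=> hxy ha hb; exists [:: x; y; b]; split=> //=.
by rewrite -!/(adj G _ _) hxy adj_sym /adj ha /= hb.
Qed.

Lemma nbr_disj x y a b : girth_eq G 4 -> adj G x y -> a \in nbr G x -> b \in nbr G y -> a != b.
Proof.
move=> hg hxy ha hb; apply/eqP => e; rewrite e in ha.
by apply: (no_tri hg hxy hb); rewrite adj_sym.
Qed.

Lemma sum_seq_ord (F : V -> R) s z0 n : size s = n ->
  \sum_(a <- s) F a = \sum_(i < n) F (nth z0 s i).
Proof. by move=> <-; rewrite (big_nth z0) big_mkord. Qed.

Lemma sum_sub_le (I : finType) (P : pred I) (F : I -> R) :
  (forall i, 0 <= F i) -> \sum_(i | P i) F i <= \sum_i F i.
Proof. by move=> h; rewrite [X in _ <= X](bigID P) /= lerDl sumr_ge0. Qed.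

Definition Xn x (i : nat) := nth x (nbr G x) i.

Lemma Xn_mem x n (i : 'I_n) : size (nbr G x) = n -> Xn x i \in nbr G x.
Proof. by move=> h; rewrite /Xn mem_nth // h. Qed.

Lemma cost_lb x y n (pi : V -> V -> R) : girth_eq G 4 -> adj G x y ->
  size (nbr G x) = n -> size (nbr G y) = n -> is_coupling G x y pi ->
  [/\ (forall i j : 'I_n, 0 <= pi (Xn x i) (Xn y j)),
      (forall i : 'I_n, \sum_(j < n) pi (Xn x i) (Xn y j) = n%:R^-1),
      (forall j : 'I_n, \sum_(i < n) pi (Xn x i) (Xn y j) = n%:R^-1)
    & 1 + \sum_(i < n) \sum_(j < n) (if adj G (Xn x i) (Xn y j) then 0 else pi (Xn x i) (Xn y j))
        <= transport_cost G x y pi].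
Proof.
move=> hg hxy hx hy [h0 hs hr hc].
have n0 : (0 < n)%N by rewrite -hx; move: hxy; rewrite /adj; case: (nbr G x).
have hn : n%:R != 0 :> R by rewrite pnatr_eq0 -lt0n.
have hrow : forall i : 'I_n, \sum_(j < n) pi (Xn x i) (Xn y j) = n%:R^-1.
  move=> i; rewrite -(sum_seq_ord (fun b => pi (Xn x i) b) y hy) hr.
  by rewrite /m (Xn_mem i hx) /deg hx.
have hcol : forall j : 'I_n, \sum_(i < n) pi (Xn x i) (Xn y j) = n%:R^-1.
  move=> j; rewrite -(sum_seq_ord (fun a => pi a (Xn y j)) x hx) hc.
  by rewrite /m (Xn_mem j hy) /deg hy.
split => //.
have e1 : 1 = \sum_(i < n) \sum_(j < n) pi (Xn x i) (Xn y j).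
  rewrite (eq_bigr (fun _ => n%:R^-1)); last by move=> i _; apply: hrow.
  by rewrite sumr_const card_ord -[_ *+ n]mulr_natr mulVf.
rewrite e1 -big_split /= /transport_cost (sum_seq_ord _ x hx).
apply: ler_sum => i _; rewrite -big_split /= (sum_seq_ord _ y hy).
apply: ler_sum => j _.
have ha := Xn_mem i hx; have hb := Xn_mem j hy.
have hab := nbr_disj hg hxy ha hb.
have hp := path_xy hxy ha hb.
have := h0 (Xn x i) (Xn y j).
rewrite -/(Xn x i) -/(Xn y j).
case: ifP => hadj p0.
- have := dist_ge1 hab hp; nra.
- have := dist_ge2 hab (negbT hadj) hp; nra.
Qed.

Lemma sum_pick (s : seq V) z (k : R) : uniq s -> z \in s ->
  \sum_(b <- s) (if z == b then k else 0) = k.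
Proof.
elim: s => [|b s IH] //= /andP[bs us]; rewrite inE big_cons.
case: (eqVneq z b) => [-> _|zb /= zs].
  rewrite big1_seq ?addr0 // => c /andP[_ cs].
  by case: eqP => // e; move: bs; rewrite e cs.
by rewrite IH // add0r.
Qed.

Lemma sum_m z n : (0 < n)%N -> size (nbr G z) = n -> \sum_(b <- nbr G z) m G R z b = 1.
Proof.
move=> n0 hz; have hn : n%:R != 0 :> R by rewrite pnatr_eq0 -lt0n.
rewrite (sum_seq_ord _ z hz) (eq_bigr (fun _ => n%:R^-1)).
  by rewrite sumr_const card_ord -[_ *+ n]mulr_natr mulVf.
by move=> i _; rewrite /m -/(Xn z i) (Xn_mem i hz) /deg hz.
Qed.

Lemma m_ge0 z a : 0 <= m G R z a.
Proof. by rewrite /m; case: ifP => _ //; rewrite invr_ge0 ler0n. Qed.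

Lemma cost_ge1 x y n (pi : V -> V -> R) : girth_eq G 4 -> adj G x y ->
  size (nbr G x) = n -> size (nbr G y) = n -> is_coupling G x y pi ->
  1 <= transport_cost G x y pi.
Proof.
move=> hg hxy hx hy hc; have [h0 _ _ hl] := cost_lb hg hxy hx hy hc.
apply: le_trans hl; rewrite lerDl; apply: sumr_ge0 => i _; apply: sumr_ge0 => j _.
by case: ifP.
Qed.

Lemma hall_cond n (p : 'I_n -> 'I_n -> R) (r : 'I_n -> 'I_n -> bool) c :
  0 < c -> (forall i j, 0 <= p i j) -> (forall i, \sum_j p i j = c) ->
  (forall j, \sum_i p i j = c) ->
  \sum_i \sum_j (if r i j then 0 else p i j) < c ->
  forall B : {set 'I_n}, (#|B| <= #|NT r B|)%N.
Proof.
move=> c0 h0 hr hc hE B.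
set NB := NT r B.
have e1 : #|B|%:R * c = \sum_(i in B) \sum_j p i j.
  by rewrite (eq_bigr (fun _ => c)) ?sumr_const ?mulr_natl // => i _; apply: hr.
have e2 : \sum_(i in B) \sum_j p i j = \sum_(i in B) \sum_(j in NB) p i j
     + \sum_(i in B) \sum_(j | j \notin NB) p i j.
  by rewrite -big_split /=; apply: eq_bigr => i _; rewrite (bigID (mem NB)).
have l1 : \sum_(i in B) \sum_(j in NB) p i j <= #|NB|%:R * c.
  apply: le_trans (sum_sub_le _ _) _.
    by move=> i; apply: sumr_ge0 => j _.
  rewrite exchange_big /= (eq_bigr (fun _ => c)) ?sumr_const ?mulr_natl // => j _.
have l2 : \sum_(i in B) \sum_(j | j \notin NB) p i j
     <= \sum_i \sum_j (if r i j then 0 else p i j).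
  apply: le_trans (sum_sub_le _ _).
    apply: ler_sum => i iB.
    have -> : \sum_(j | j \notin NB) p i j = \sum_(j | j \notin NB) (if r i j then 0 else p i j).
      apply: eq_bigr => j jN; case: ifP => // rij.
      move: jN; rewrite /NB /NT /NS !inE /=; case/negP; apply/existsP; exists i; by rewrite iB rij.
    by apply: sum_sub_le => j; case: ifP.
  by move=> i; apply: sumr_ge0 => j _; case: ifP.
have : #|B|%:R * c < (#|NB|.+1)%:R * c by rewrite -natr1 mulrDl mul1r; lra.
by rewrite ltr_pM2r // ltr_nat ltnS.
Qed.

Lemma hard x y n : girth_eq G 4 -> adj G x y ->
  size (nbr G x) = n -> size (nbr G y) = n -> W1 G R x y = 1 ->
  exists sigma : V -> V,
     [/\ {in nbr G x &, injective sigma},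
         {in nbr G x, forall a, sigma a \in nbr G y},
         {in nbr G y, forall b, exists2 a, a \in nbr G x & sigma a = b}
       & {in nbr G x, forall a, adj G a (sigma a)}].
Proof.
move=> hg hxy hx hy hW.
have n0 : (0 < n)%N by rewrite -hx; move: hxy; rewrite /adj; case: (nbr G x).
have hn : n%:R != 0 :> R by rewrite pnatr_eq0 -lt0n.
pose pi0 := fun a b => m G R x a * m G R y b.
have c0 : is_coupling G x y pi0.
  split.
  - by move=> a b; rewrite /pi0 mulr_ge0 ?m_ge0.
  - move=> a b; rewrite /pi0 /m; do 2 case: ifP => ? /=; by rewrite ?mulr0 ?mul0r ?eqxx.
  - by move=> a; rewrite /pi0 -big_distrr /= (sum_m n0 hy) mulr1.
  - by move=> b; rewrite /pi0 -big_distrl /= (sum_m n0 hx) mul1r.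
rewrite /W1 in hW.
have [c [pi [hpi ->]] hlt] : exists2 c, [set c : R | exists pi, is_coupling G x y pi /\ c = transport_cost G x y pi] c & c < 1 + n%:R^-1.
  apply: inf_lt; first by exists (transport_cost G x y pi0), pi0.
  by rewrite hW ltrDl invr_gt0 ltr0n.
have [h0 hr hc hl] := cost_lb hg hxy hx hy hpi.
have hc0 : 0 < n%:R^-1 :> R by rewrite invr_gt0 ltr0n.
have hE : \sum_(i < n) \sum_(j < n) (if adj G (Xn x i) (Xn y j) then 0 else pi (Xn x i) (Xn y j)) < n%:R^-1 by lra.
have hcond := hall_cond (r := fun i j => adj G (Xn x i) (Xn y j)) hc0 h0 hr hc hE.
have [f [fi fr]] := @hall_full _ _ (Ordinal n0) _ hcond.
pose i0 := Ordinal n0.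
pose ix z a := insubd i0 (index a (nbr G z)) : 'I_n.
have ixK : forall z a, size (nbr G z) = n -> a \in nbr G z -> Xn z (ix z a) = a.
  move=> z a hz ha; have hi : (index a (nbr G z) < n)%N by rewrite -hz index_mem.
  by rewrite /Xn /ix val_insubd hi nth_index.
have Xinj : forall z (i : 'I_n), size (nbr G z) = n -> ix z (Xn z i) = i.
  move=> z i hz; apply: val_inj; rewrite /ix val_insubd /Xn index_uniq ?nbr_uniq ?hz //.
  by rewrite ltn_ord.
have Yinj : forall z (i j : 'I_n), size (nbr G z) = n -> Xn z i = Xn z j -> i = j.
  move=> z i j hz e; apply: val_inj; apply/eqP.
  have hi : (i < size (nbr G z))%N by rewrite hz.
  have hj : (j < size (nbr G z))%N by rewrite hz.
  by rewrite -(nth_uniq z hi hj (nbr_uniq G z)); apply/eqP; exact: e.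
exists (fun a => Xn y (f (ix x a))); split.
- move=> a b ha hb /= /(Yinj _ _ _ hy) /fi e.
  by rewrite -(ixK x a hx ha) -(ixK x b hx hb) e.
- by move=> a _; apply: Xn_mem.
- move=> b hb; case: (injF_bij fi) => g fg gf.
  exists (Xn x (g (ix y b))); first exact: Xn_mem.
  by rewrite Xinj // gf ixK.
- by move=> a ha /=; have := fr (ix x a); rewrite ixK.
Qed.

Lemma easy x y n (sigma : V -> V) : girth_eq G 4 -> adj G x y ->
  size (nbr G x) = n -> size (nbr G y) = n ->
     [/\ {in nbr G x &, injective sigma},
         {in nbr G x, forall a, sigma a \in nbr G y},
         {in nbr G y, forall b, exists2 a, a \in nbr G x & sigma a = b}
       & {in nbr G x, forall a, adj G a (sigma a)}] ->
  W1 G R x y = 1.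
Proof.
move=> hg hxy hx hy [sinj smem ssurj sadj].
have n0 : (0 < n)%N by rewrite -hx; move: hxy; rewrite /adj; case: (nbr G x).
have hn : n%:R != 0 :> R by rewrite pnatr_eq0 -lt0n.
set c := n%:R^-1 : R.
pose pi1 := fun a b => if (a \in nbr G x) && (sigma a == b) then c else 0.
have hpi : is_coupling G x y pi1.
  split.
  - by move=> a b; rewrite /pi1; case: ifP => _ //; rewrite invr_ge0 ler0n.
  - move=> a b; rewrite /pi1; case: ifP => [/andP[ha /eqP <-]|_]; first by rewrite ha smem.
    by rewrite eqxx.
  - move=> a; rewrite /pi1 /m /deg hx; case: (boolP (a \in nbr G x)) => ha /=.
      by rewrite sum_pick ?nbr_uniq ?smem.
    by rewrite big1.
  - move=> b; rewrite /m /deg hy; case: (boolP (b \in nbr G y)) => hb.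
      have [a0 ha0 e] := ssurj b hb.
      rewrite -/c -(sum_pick c (nbr_uniq G x) ha0); apply: eq_big_seq => a ha.
      rewrite /pi1 ha /= -e.
      case: (eqVneq a0 a) => [->|ne]; first by rewrite eqxx.
      case: eqP => // h; case/eqP: ne; exact: (sinj _ _ ha0 ha (esym h)).
    rewrite big1_seq // => a /andP[_ ha]; rewrite /pi1 ha /=; case: eqP => // e.
    by move: hb; rewrite -e smem.
have hcost : transport_cost G x y pi1 = 1.
  rewrite /transport_cost (eq_big_seq (fun _ => c)).
    by rewrite (sum_seq_ord _ x hx) sumr_const card_ord -[_ *+ n]mulr_natr mulVf.
  move=> a ha.
  rewrite (eq_bigr (fun b => if sigma a == b then c * dist G R a (sigma a) else 0)).
    rewrite sum_pick ?nbr_uniq ?smem //.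
    have d1 := dist_le1 (sadj a ha).
    have hp : exists p, path (adj G) a p /\ last a p = sigma a.
      by exists [:: sigma a]; rewrite /= andbT; split=> //; exact: sadj.
    have d2 := dist_ge1 (adj_neq (sadj a ha)) hp.
    have -> : dist G R a (sigma a) = 1 by apply/le_anti; rewrite d1 d2.
    by rewrite mulr1.
  by move=> b _; rewrite /pi1 ha /=; case: eqP => [<-|_]; rewrite ?mul0r.
rewrite /W1; apply/eqP; rewrite eq_le; apply/andP; split.
- have hl : has_lbound [set c : R | exists pi, is_coupling G x y pi /\ c = transport_cost G x y pi].
    by exists 1 => r [pi [hp ->]]; exact: (cost_ge1 hg hxy hx hy hp).
  have := ge_inf hl; apply; by exists pi1; rewrite hcost.
- apply: lb_le_inf; first by exists 1, pi1; rewrite hcost.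
  by move=> r [pi [hp ->]]; exact: (cost_ge1 hg hxy hx hy hp).
Qed.
End Main.

Theorem corollary4p3 (R : realType) (V : eqType) (G : lfgraph V)
  (x y : V) (d : nat) :
  connected G -> girth_eq G 4 -> adj G x y ->
  deg G x = d -> deg G y = d ->
  (kappa G R x y = 0 <->
   exists sigma : V -> V,
     [/\ {in nbr G x &, injective sigma},
         {in nbr G x, forall a, sigma a \in nbr G y},
         {in nbr G y, forall b, exists2 a, a \in nbr G x & sigma a = b}
       & {in nbr G x, forall a, adj G a (sigma a)}]).
Proof.
move=> _ hg hxy hx hy; rewrite /kappa; split.
- move=> hk; apply: (hard hg hxy hx hy); lra.
- by move=> [sigma hs]; rewrite (@easy R V G x y d sigma hg hxy hx hy hs) subrr.
Qed.
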